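(* Let $\Gamma=(N,(S_i)_{i\in N},(u_i)_{i\in N})$ be a finite normal-form game with $N=\{1,\dots,n\}$. Let $\pi=(\pi_1,\dots,\pi_n)$ and $\pi'=(\pi_1',\dots,\pi_n')$ be profiles of tolerance distributions, where for each $i$ both $\pi_i$ and $\pi_i'$ are probability distributions with finite support contained in $[0,\infty)$. Suppose $\pi'$ stochastically dominates $\pi$. Then every $\pi$-tolerant equilibrium of $\Gamma$ is a $\pi'$-tolerant equilibrium of $\Gamma$.
   Context: $S_i$ is the finite set of pure strategies of player $i$, and $S=S_1\times\cdots\times S_n$. Each $u_i:S\to\mathbb{R}$ is extended multilinearly to mixed-strategy profiles. $\Sigma_i$ denotes the set of mixed strategies (probability distributions on $S_i$) of player $i$; for a profile $\sigma=(\sigma_1,\dots,\sigma_n)$, $\sigma_{-i}$ denotes the profile of all components except the $i$-th. A pure strategy $s_i$ is consistent with a tolerance $t\ge 0$ and a profile $\sigma_{-i}$ if $s_i$ is a $t$-best response to $\sigma_{-i}$, i.e., $u_i(s_i',\sigma_{-i})\le u_i(s_i,\sigma_{-i})+t$ for every $s_i'\in S_i$. Given a profile $\pi=(\pi_1,\dots,\pi_n)$, where $\pi_i$ is a distribution on a finite set $T_i\subset[0,\infty)$ of possible tolerances (''types'') of player $i$, a mixed-strategy profile $\sigma$ is a $\pi$-tolerant equilibrium if for each player $i$ there is a map $g_i$ from $T_i$ to $\Sigma_i$ such that (E1) for every $t\in T_i$, every pure strategy in the support of $g_i(t)$ is consistent with $t$ and $\sigma_{-i}$; and (E2) $\sum_{t\in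 T_i}\pi_i(t)\,g_i(t)=\sigma_i$ (as mixed strategies). For a distribution $\pi_i$, let $F^{\pi_i}(t)=\sum_{t'\le t}\pi_i(t')$. $\pi_i'$ stochastically dominates $\pi_i$ if $F^{\pi_i'}(t)\le F^{\pi_i}(t)$ for all $t$; $\pi'$ stochastically dominates $\pi$ if $\pi_i'$ stochastically dominates $\pi_i$ for every $i$. *)

(* Defs.v *)
From HB Require Import structures.
From mathcomp Require Import all_boot all_order all_algebra.
Set Implicit Arguments. Unset Strict Implicit. Unset Printing Implicit Defensive.
Import Order.TTheory GRing.Theory Num.Theory.
Local Open Scope ring_scope.

Definition pprofile (n : nat) (S : 'I_n -> finType) := {dffun forall i, S i}.

Definition is_mixed (R : realFieldType) (T : finType) (x : {ffun T -> R}) : Prop :=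
  (forall s, 0 <= x s) /\ \sum_(s : T) x s = 1.

(* Multilinear extension of u_i evaluated at (s_i', sigma_{-i}):
   u_i(s_i', sigma_{-i}) = sum_s [s_i = s_i'] * prod_{j<>i} sigma_j(s_j) * u_i(s). *)
Definition upure (R : realFieldType) (n : nat) (S : 'I_n -> finType)
  (u : 'I_n -> pprofile S -> R) (sigma : forall j, {ffun S j -> R})
  (i : 'I_n) (si : S i) : R :=
  \sum_(s : pprofile S)
     (if s i == si then \prod_(j < n | j != i) sigma j (s j) else 0) * u i s.

Definition consistent (R : realFieldType) (n : nat) (S : 'I_n -> finType)
  (u : 'I_n -> pprofile S -> R) (sigma : forall j, {ffun S j -> R})
  (i : 'I_n) (t : R) (si : S i) : Prop :=
  forall si' : S i, upure u sigma si' <= upure u sigma si + t.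

Record tdist (R : realFieldType) := TDist { tsupp : seq R; tprob : R -> R }.

Definition is_tdist (R : realFieldType) (p : tdist R) : Prop :=
  [/\ uniq (tsupp p),
      (forall t, t \in tsupp p -> 0 <= t),
      (forall t, t \in tsupp p -> 0 <= tprob p t) &
      \sum_(t <- tsupp p) tprob p t = 1].

Definition cdf (R : realFieldType) (p : tdist R) (t : R) : R :=
  \sum_(t' <- tsupp p | t' <= t) tprob p t'.

Definition stoch_dom (R : realFieldType) (p' p : tdist R) : Prop :=
  forall t : R, cdf p' t <= cdf p t.

Definition stoch_dom_profile (R : realFieldType) (n : nat)
  (pi' pi : 'I_n -> tdist R) : Prop :=
  forall i, stoch_dom (pi' i) (pi i).

Definition tolerant_eq (R : realFieldType) (n : nat) (S : 'I_n -> finType)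
  (u : 'I_n -> pprofile S -> R) (pi : 'I_n -> tdist R)
  (sigma : forall j, {ffun S j -> R}) : Prop :=
  (forall i, is_mixed (sigma i)) /\
  forall i : 'I_n, exists g : R -> {ffun S i -> R},
    [/\ (forall t, t \in tsupp (pi i) -> is_mixed (g t)),
        (forall t, t \in tsupp (pi i) -> forall si : S i,
            0 < g t si -> @consistent R n S u sigma i t si) &
        (forall si : S i,
            \sum_(t <- tsupp (pi i)) tprob (pi i) t * g t si = sigma i si)].

(* Main.v *)
Require Import Defs.
From HB Require Import structures.
From mathcomp Require Import all_boot all_order all_algebra.
From mathcomp Require Import ring lra.
Import Order.TTheory GRing.Theory Num.Theory.
Set Implicit Arguments. Unset Strict Implicit.
Local Open Scope ring_scope.

Definition ov (R : realFieldType) (a b c d : R) :=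
  Num.min b d - Num.min a d - Num.min b c + Num.min a c.

Lemma ov_ge0 (R : realFieldType) (a b c d : R) : a <= b -> c <= d -> 0 <= ov a b c d.
Proof.
move=> ab cd; rewrite /ov !minEle.
case: (leP b d); case: (leP a d); case: (leP b c); case: (leP a c); move=> *; lra.
Qed.

Lemma ov_0 (R : realFieldType) (a b c d : R) : a <= b -> b <= c -> c <= d -> ov a b c d = 0.
Proof.
move=> ab bc cd; rewrite /ov !minEle.
case: (leP b d); case: (leP a d); case: (leP b c); case: (leP a c); move=> *; lra.
Qed.

Lemma tele_sorted (R : realFieldType) (p : R -> R) (s : seq R) : sorted <%R s ->
 forall phi : R -> R,
 \sum_(x <- s) (phi (\sum_(y <- s | y <= x) p y) - phi (\sum_(y <- s | y <= x) p y - p x))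
   = phi (\sum_(x <- s) p x) - phi 0.
Proof.
elim: s => [|x s IH] Hs phi; first by rewrite !big_nil subrr.
have Hall : all (fun y => x < y) s by apply: (order_path_min (@lt_trans _ _)).
have Hs' : sorted <%R s by move: Hs => /= /path_sorted.
rewrite big_cons.
have -> : \sum_(y <- x :: s | y <= x) p y = p x.
  rewrite big_cons lexx big1_seq ?addr0 // => y /andP [yx ys].
  by move/allP: Hall => /(_ y ys); rewrite ltNge yx.
rewrite subrr.
have E : \sum_(x0 <- s) (phi (\sum_(y <- x :: s | y <= x0) p y) -
        phi (\sum_(y <- x :: s | y <= x0) p y - p x0))
     = \sum_(x0 <- s) ((fun z => phi (p x + z)) (\sum_(y <- s | y <= x0) p y) -
        (fun z => phi (p x + z)) (\sum_(y <- s | y <= x0) p y - p x0)).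
  rewrite big_seq [RHS]big_seq; apply: eq_bigr => y ys.
  have xy : x <= y by move/allP: Hall => /(_ y ys) /ltW.
  by rewrite big_cons xy addrA.
rewrite E.
have := IH Hs' (fun z => phi (p x + z)) => /= ->.
rewrite addr0 big_cons.
lra.
Qed.

Lemma tele (R : realFieldType) (p : R -> R) (s : seq R) : uniq s ->
 forall phi : R -> R,
 \sum_(x <- s) (phi (\sum_(y <- s | y <= x) p y) - phi (\sum_(y <- s | y <= x) p y - p x))
   = phi (\sum_(x <- s) p x) - phi 0.
Proof.
move=> us phi.
have Hp := perm_sort <=%R s.
have Hperm : perm_eq (sort <=%R s) s by rewrite Hp perm_refl.
have E : forall x, \sum_(y <- s | y <= x) p y = \sum_(y <- sort <=%R s | y <= x) p y.
  by move=> x; rewrite (perm_big _ Hperm).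
under eq_bigr do rewrite E.
rewrite -(perm_big _ Hperm) tele_sorted ?sort_lt_sorted //.
by rewrite (perm_big _ Hperm).
Qed.

Lemma exists_max (R : realFieldType) (T : finType) (f : T -> R) (x : T) :
  exists y, forall z, f z <= f y.
Proof. case: (arg_maxP f (isT : predT x)) => y _ H. exists y => z. exact: H. Qed.

Lemma cdf_split (R : realFieldType) (P : tdist R) t t0 : is_tdist P -> t \in tsupp P ->
  cdf P t0 = (if t <= t0 then tprob P t else 0) +
     \sum_(y <- tsupp P | y != t) (if y <= t0 then tprob P y else 0).
Proof.
case=> uT _ _ _ tT; rewrite /cdf big_mkcond /=.
by rewrite (bigD1_seq t) //=.
Qed.

Lemma cdf_facts (R : realFieldType) (P : tdist R) t : is_tdist P -> t \in tsupp P ->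
  0 <= cdf P t - tprob P t /\ cdf P t <= 1.
Proof.
move=> HP tT; have HP' := HP; case: HP' => uT T0 Tp Ts.
split.
  rewrite (@cdf_split _ _ t t HP tT) lexx [tprob P t + _]addrC addrK.
  rewrite big_seq_cond; apply: sumr_ge0 => y /andP [yT _].
  by case: ifP => _ //; apply: Tp.
rewrite -Ts /cdf big_mkcond /= big_seq [X in _ <= X]big_seq.
apply: ler_sum => y yT; case: ifP => _ //; exact: Tp.
Qed.

Lemma cdf_mono (R : realFieldType) (P : tdist R) t t' : is_tdist P -> t \in tsupp P ->
  t' < t -> cdf P t' <= cdf P t - tprob P t.
Proof.
move=> HP tT lt; have HP' := HP; case: HP' => uT T0 Tp Ts.
rewrite (@cdf_split _ _ t t HP tT) lexx [tprob P t + _]addrC addrK (@cdf_split _ _ t t' HP tT).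
rewrite (lt_geF lt) add0r big_seq_cond [X in _ <= X]big_seq_cond.
apply: ler_sum => y /andP [yT _].
case: ifP => yt'; first by rewrite (le_trans yt' (ltW lt)).
by case: ifP => _ //; apply: Tp.
Qed.

Theorem theorem2p3 (R : realFieldType) (n : nat) (S : 'I_n -> finType)
  (u : 'I_n -> pprofile S -> R) (pi pi' : 'I_n -> tdist R)
  (Hpi : forall i, is_tdist (pi i)) (Hpi' : forall i, is_tdist (pi' i))
  (Hdom : stoch_dom_profile pi' pi)
  (sigma : forall j, {ffun S j -> R}) :
  tolerant_eq u pi sigma -> tolerant_eq u pi' sigma.
Proof.
case=> Hmix Hex; split => // i.
have [g [Hg1 Hg2 Hg3]] := Hex i.
have HP := Hpi i; have HP' := Hpi' i.
case: (HP) => uT T0 Tp Tsum; case: (HP') => uT' T0' Tp' Tsum'.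
have [s0 Hs0] : exists s0 : S i, forall s : S i, upure u sigma s <= upure u sigma s0.
  case: (pickP (@predT (S i))) => [x _|H]; first exact: (@exists_max _ _ (fun s => upure u sigma s) x).
  case: (Hmix i) => _; rewrite big_pred0 // => /eqP; by rewrite eq_sym oner_eq0.
set T := tsupp (pi i); set T' := tsupp (pi' i).
set p := tprob (pi i); set p' := tprob (pi' i).
set F := cdf (pi i); set F' := cdf (pi' i).
pose gam t t' := ov (F' t' - p' t') (F' t') (F t - p t) (F t).
have gam_ge0 : forall t t', t \in T -> t' \in T' -> 0 <= gam t t'.
  move=> t t' tT tT'; apply: ov_ge0.
    by rewrite gerBl; apply: Tp'.
  by rewrite gerBl; apply: Tp.
have gam_supp : forall t t', t \in T -> t' \in T' -> 0 < gam t t' -> t <= t'.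
  move=> t t' tT tT' Hg; case: (leP t t') => // lt.
  have : gam t t' = 0.
    apply: ov_0.
    - by rewrite gerBl; apply: Tp'.
    - exact: le_trans (Hdom i t') (cdf_mono HP tT lt).
    - by rewrite gerBl; apply: Tp.
  by move=> E; rewrite E ltxx in Hg.
have M1 : forall t, t \in T -> \sum_(t' <- T') gam t t' = p t.
  move=> t tT; case: (cdf_facts HP tT) => H0 H1.
  pose phi y := Num.min y (F t) - Num.min y (F t - p t).
  have E : forall t', gam t t' = phi (F' t') - phi (F' t' - p' t').
    by move=> t'; rewrite /gam /ov /phi; ring.
  under eq_bigr do rewrite E.
  rewrite /F' /cdf -/T' -/p' tele // Tsum' /phi.
  have a1 : F t - p t <= 1 by apply: (le_trans _ H1); rewrite lerBlDr lerDl; apply: Tp.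
  have a0 : 0 <= F t by apply: (le_trans H0); rewrite lerBlDr lerDl; apply: Tp.
  rewrite (min_r (x:=1) H1) (min_r (x:=1) a1) (min_l (y:=F t) a0) (min_l (y:=F t - p t) H0).
  rewrite /F /p; ring.
have M2 : forall t', t' \in T' -> \sum_(t <- T) gam t t' = p' t'.
  move=> t' tT'; case: (cdf_facts HP' tT') => H0 H1.
  pose psi x := Num.min (F' t') x - Num.min (F' t' - p' t') x.
  have E : forall t, gam t t' = psi (F t) - psi (F t - p t).
    by move=> t; rewrite /gam /ov /psi; ring.
  under eq_bigr do rewrite E.
  rewrite /F /cdf -/T -/p tele // Tsum /psi.
  have a1 : F' t' - p' t' <= 1 by apply: (le_trans _ H1); rewrite lerBlDr lerDl; apply: Tp'.
  have a0 : 0 <= F' t' by apply: (le_trans H0); rewrite lerBlDr lerDl; apply: Tp'.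
  rewrite (min_l (y:=1) H1) (min_l (y:=1) a1) (min_r (y:=0) a0) (min_r (y:=0) H0).
  rewrite /F' /p'; ring.
exists (fun t' => if p' t' == 0 then [ffun s => (s == s0)%:R]
                  else [ffun s => (\sum_(t <- T) gam t t' * g t s) / p' t']).
split.
- move=> t' tT'; case: eqP => Hp0.
    split; first by move=> s; rewrite ffunE ler0n.
    rewrite (bigD1 s0) //= ffunE eqxx big1 ?addr0 // => s /negbTE Hs.
    by rewrite ffunE Hs.
  have pos : 0 < p' t' by rewrite lt_neqAle eq_sym; apply/andP; split; [apply/eqP|apply: Tp'].
  split.
    move=> s; rewrite ffunE divr_ge0 ?(ltW pos) //.
    rewrite big_seq; apply: sumr_ge0 => t tT; apply: mulr_ge0; first exact: gam_ge0.
    by case: (Hg1 t tT) => ->.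
  under eq_bigr do rewrite ffunE.
  rewrite -mulr_suml exchange_big /=.
  under eq_bigr do rewrite -mulr_sumr.
  rewrite big_seq (eq_bigr (fun t => gam t t')) -?big_seq ?M2 ?divff //.
    by apply/eqP.
  by move=> t tT; case: (Hg1 t tT) => _ ->; rewrite mulr1.
- move=> t' tT' s; case: eqP => Hp0.
    rewrite ffunE; case: eqP => [-> _|]; last by rewrite ltxx.
    move=> s'; apply: le_trans (Hs0 s') _; rewrite lerDl; exact: T0'.
  rewrite ffunE => Hpos.
  have pos : 0 < p' t' by rewrite lt_neqAle eq_sym; apply/andP; split; [apply/eqP|apply: Tp'].
  have : 0 < \sum_(t <- T) gam t t' * g t s.
    by move: Hpos; rewrite pmulr_lgt0 // invr_gt0.
  rewrite big_seq => Hsum.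
  have /hasP [t tT Ht] : has (fun t => 0 < gam t t' * g t s) T.
    apply/negPn/negP => /hasPn Hn.
    have : \sum_(t <- T | t \in T) gam t t' * g t s <= 0.
      by apply: sumr_le0 => t tT; rewrite leNgt; exact: Hn.
    by rewrite leNgt Hsum.
  have g0 : 0 <= g t s by case: (Hg1 t tT) => ->.
  have ga0 := gam_ge0 t t' tT tT'.
  have gpos : 0 < gam t t'.
    by rewrite lt_neqAle ga0 andbT; apply/negP => /eqP E; move: Ht; rewrite -E mul0r ltxx.
  have gspos : 0 < g t s.
    by rewrite lt_neqAle g0 andbT; apply/negP => /eqP E; move: Ht; rewrite -E mulr0 ltxx.
  have tt' := gam_supp t t' tT tT' gpos.
  move=> s'; apply: le_trans (Hg2 t tT s gspos s') _; by rewrite lerD2l.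
- move=> s; rewrite -Hg3.
  have E : forall t', t' \in T' -> p' t' * (if p' t' == 0 then [ffun s => (s == s0)%:R]
                  else [ffun s => (\sum_(t <- T) gam t t' * g t s) / p' t']) s
          = \sum_(t <- T) gam t t' * g t s.
    move=> t' tT'; case: eqP => Hp0.
      rewrite Hp0 mul0r big_seq big1 // => t tT.
      have : gam t t' = 0.
        apply/eqP; rewrite eq_le gam_ge0 // andbT -Hp0 -(M2 t' tT').
        rewrite (big_rem t tT) /= lerDl big_seq; apply: sumr_ge0 => x xr.
        apply: gam_ge0 => //; exact: mem_rem xr.
      by move=> ->; rewrite mul0r.
    by rewrite ffunE mulrC -mulrA mulVf ?mulr1 //; apply/eqP.
  rewrite big_seq (eq_bigr _ E) -big_seq exchange_big /=.
  rewrite big_seq [RHS]big_seq; apply: eq_bigr => t tT.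
  by rewrite -mulr_suml M1 // mulrC.
Qed.
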